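(* Let $\mathcal{G}$ be a compact group with normalized Haar measure and let $g\mapsto V_g$, $g\mapsto\tilde V_g$ be unitary representations of $\mathcal{G}$ on $\mathbb{C}^d$. Let $G=\{\overline{V_g}\otimes\tilde V_g: g\in\mathcal{G}\}$ and $G'=\{X\in\mathcal{M}_{d^2}: [X,Y]=0\ \forall Y\in G\}$. Let $|\Omega\rangle=d^{-1/2}\sum_j|j,j\rangle$, $\mathcal{S}=\{\rho\in\mathcal{M}_{d^2}:\rho\ge0,\ \operatorname{tr}_1\rho=\operatorname{tr}_2\rho=\mathbb{1}/d\}$, $\mathcal{U}=\mathrm{conv}\{(\mathbb{1}\otimes U)|\Omega\rangle\langle\Omega|(\mathbb{1}\otimes U^\dagger): U\text{ unitary}\}$, and $\mathcal{W}=\{W\in\mathcal{M}_{d^2}: W=W^\dagger,\ \operatorname{tr}[W\sigma]\ge0\ \forall\sigma\in\mathcal{U}\}$. Let $\rho\in\mathcal{S}\cap G'$. Then $\rho\in\mathcal{U}$ if and only if $\operatorname{tr}[W\rho]\ge0$ for all $W\in\mathcal{W}\cap G'$. Moreover, $$\inf\{\alpha_p+\alpha_n: \rho=\alpha_p\sigma_p-\alpha_n\sigma_n,\ \alpha_{p,n}\ge0,\ \sigma_{p,n}\in\mathcal{U}\}=\inf\{\alpha_p+\alpha_n: \rho=\alpha_p\sigma_p-\alpha_n\sigma_n,\ \alpha_{p,n}\ge0,\ \sigma_{p,n}\in\mathcal{U}\cap G'\},$$ and the same equality holds with $\alpha_p+\alpha_n$ replaced by $\alpha_n$ in both infima.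
   Context: The condition $\rho_T\in G'$ for the Jamiolkowski state $\rho_T=(\mathrm{id}\otimes T)(|\Omega\rangle\langle\Omega|)$ is equivalent to covariance of the channel $T$: $T(V_g\,\cdot\,V_g^\dagger)=\tilde V_gT(\cdot)\tilde V_g^\dagger$ for all $g$. $\overline{V_g}$ denotes the entrywise complex conjugate. *)

(* Defs.v *)
From HB Require Import structures.
From mathcomp Require Import all_boot all_order all_algebra.
From mathcomp Require Import spectral.
From mathcomp Require Import complex mxtens.
From mathcomp Require Import all_classical all_reals topology ereal normedtype.
Import numFieldTopology.Exports.

Set Implicit Arguments.
Unset Strict Implicit.
Unset Printing Implicit Defensive.

Import Order.TTheory GRing.Theory Num.Theory.
Local Open Scope ring_scope.
Local Open Scope classical_set_scope.
Local Open Scope complex_scope.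

Definition is_compact_group (T : topologicalType)
    (mul : T -> T -> T) (inv : T -> T) (e : T) : Prop :=
  [/\ (forall x y z, mul x (mul y z) = mul (mul x y) z),
      (forall x, mul e x = x /\ mul x e = x) &
      (forall x, mul (inv x) x = e /\ mul x (inv x) = e)] /\
  [/\ continuous (fun p : T * T => mul p.1 p.2),
      continuous inv,
      hausdorff_space T &
      compact [set: T]].

Section Quantum.
Variable R : realType.
Local Notation C := (R[i]).

Definition adjmx m n (A : 'M[C]_(m, n)) : 'M[C]_(n, m) :=
  \matrix_(i, j) Num.conj (A j i).

Definition conjmx_entry m n (A : 'M[C]_(m, n)) : 'M[C]_(m, n) :=
  map_mx Num.conj A.

(* Kronecker product, with basis |a,b> indexed by mxtens_index (a, b) = a*n+b *)
Definition kron m n p q (A : 'M[C]_(m, n)) (B : 'M[C]_(p, q))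
  : 'M[C]_(m * p, n * q) :=
  \matrix_(i, j) (A (mxtens_unindex i).1 (mxtens_unindex j).1 *
                  B (mxtens_unindex i).2 (mxtens_unindex j).2).

Definition ptrace1 d (X : 'M[C]_(d * d)) : 'M[C]_d :=
  \matrix_(b, e) \sum_(a < d) X (mxtens_index (a, b)) (mxtens_index (a, e)).
Definition ptrace2 d (X : 'M[C]_(d * d)) : 'M[C]_d :=
  \matrix_(a, c) \sum_(b < d) X (mxtens_index (a, b)) (mxtens_index (c, b)).

Definition hermitian n (A : 'M[C]_n) : Prop := adjmx A = A.

Definition psd n (A : 'M[C]_n) : Prop :=
  hermitian A /\ forall v : 'cV[C]_n, 0 <= (adjmx v *m A *m v) 0 0.

Definition omega d : 'cV[C]_(d * d) :=
  \col_k (if (mxtens_unindex k).1 == (mxtens_unindex k).2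
          then (sqrtC (d%:R : C))^-1 else 0).

Definition maxent d (U : 'M[C]_d) : 'M[C]_(d * d) :=
  kron 1%:M U *m (omega d *m adjmx (omega d)) *m kron 1%:M (adjmx U).

Definition conv n (A : set 'M[C]_n) : set 'M[C]_n :=
  [set X | exists k (lam : 'I_k -> R) (Y : 'I_k -> 'M[C]_n),
     [/\ (forall i, 0 <= lam i), \sum_(i < k) lam i = 1,
         (forall i, A (Y i)) &
         X = \sum_(i < k) (lam i)%:C *: Y i]].

Definition Sset d : set 'M[C]_(d * d) :=
  [set rho | psd rho /\ ptrace1 rho = (d%:R^-1) %:M /\
             ptrace2 rho = (d%:R^-1) %:M].

Definition Uset d : set 'M[C]_(d * d) :=
  conv [set maxent U | U in [set U : 'M[C]_d | U \is unitarymx]].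

Definition Wset d : set 'M[C]_(d * d) :=
  [set W | hermitian W /\ forall sigma, @Uset d sigma -> 0 <= \tr (W *m sigma)].

Definition commutant d (T : Type) (V Vt : T -> 'M[C]_d) : set 'M[C]_(d * d) :=
  [set X | forall g, let Y := kron (conjmx_entry (V g)) (Vt g) in
                     X *m Y = Y *m X].

Definition decomps d (A : set 'M[C]_(d * d)) (rho : 'M[C]_(d * d))
  : set (R * R) :=
  [set a | exists sp sn, [/\ 0 <= a.1, 0 <= a.2, A sp, A sn &
            rho = a.1%:C *: sp - a.2%:C *: sn]].

Definition unitary_rep (T : topologicalType) (mul : T -> T -> T) (e : T) d
    (V : T -> 'M[C]_d) : Prop :=
  [/\ V e = 1%:M,
      (forall g h, V (mul g h) = V g *m V h),
      (forall g, V g \is unitarymx) &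
      (forall i j, continuous (fun g => complex.Re (V g i j)) /\
                   continuous (fun g => complex.Im (V g i j)))].

End Quantum.

Arguments Sset {R} d _.
Arguments Uset {R} d _.
Arguments Wset {R} d _.
Arguments omega {R} d.
Arguments commutant {R} d {T} V Vt _.

(* Main.v *)
Require Import Defs.
From HB Require Import structures.
From mathcomp Require Import all_boot all_order all_algebra.
From mathcomp Require Import spectral complex mxtens.
From mathcomp Require Import all_classical all_reals topology ereal normedtype derive.
From mathcomp Require Import ring lra.
Import numFieldTopology.Exports.
Import numFieldNormedType.Exports.
Import Order.TTheory GRing.Theory Num.Theory.
Local Open Scope ring_scope.
Local Open Scope classical_set_scope.
Local Open Scope complex_scope.
Set Implicit Arguments.
Unset Strict Implicit.
Unset Printing Implicit Defensive.
Section Alg.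
Variable R : realType.
Local Notation C := (R[i]).

Lemma conjCr (x : R) : Num.conj (x%:C : C) = x%:C. Proof. exact: conjc_real. Qed.

Lemma adjmxE m n (A : 'M[C]_(m, n)) i j : adjmx A i j = Num.conj (A j i).
Proof. by rewrite mxE. Qed.

Lemma adjmxK m n (A : 'M[C]_(m, n)) : adjmx (adjmx A) = A.
Proof. by apply/matrixP => i j; rewrite !adjmxE conjCK. Qed.

Lemma adjmxD m n (A B : 'M[C]_(m, n)) : adjmx (A + B) = adjmx A + adjmx B.
Proof. by apply/matrixP => i j; rewrite !mxE rmorphD. Qed.

Lemma adjmxN m n (A : 'M[C]_(m, n)) : adjmx (- A) = - adjmx A.
Proof. by apply/matrixP => i j; rewrite !mxE rmorphN. Qed.

Lemma adjmxB m n (A B : 'M[C]_(m, n)) : adjmx (A - B) = adjmx A - adjmx B.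
Proof. by rewrite adjmxD adjmxN. Qed.

Lemma adjmxZ m n (c : C) (A : 'M[C]_(m, n)) : adjmx (c *: A) = Num.conj c *: adjmx A.
Proof. by apply/matrixP => i j; rewrite !mxE rmorphM. Qed.

Lemma adjmxZr m n (c : R) (A : 'M[C]_(m, n)) : adjmx (c%:C *: A) = c%:C *: adjmx A.
Proof. by rewrite adjmxZ conjCr. Qed.

Lemma adjmx_mul m n p (A : 'M[C]_(m, n)) (B : 'M[C]_(n, p)) :
  adjmx (A *m B) = adjmx B *m adjmx A.
Proof.
apply/matrixP => i j; rewrite !mxE rmorph_sum; apply: eq_bigr => k _.
by rewrite !mxE rmorphM mulrC.
Qed.

Lemma adjmx1 n : adjmx (1%:M : 'M[C]_n) = 1%:M.
Proof. by apply/matrixP => i j; rewrite !mxE eq_sym rmorph_nat. Qed.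

Lemma adjmx_scalar n (c : C) : adjmx (c%:M : 'M[C]_n) = (Num.conj c)%:M.
Proof. by apply/matrixP => i j; rewrite !mxE eq_sym rmorphMn. Qed.

Lemma adjmx_sum m n k (F : 'I_k -> 'M[C]_(m, n)) :
  adjmx (\sum_(i < k) F i) = \sum_(i < k) adjmx (F i).
Proof.
elim/big_ind2: _ => //; last by move=> *; rewrite adjmxD; congr (_ + _).
by apply/matrixP => i j; rewrite !mxE rmorph0.
Qed.

Lemma unitary_adj n (U : 'M[C]_n) : U \is unitarymx <-> U *m adjmx U = 1%:M.
Proof.
have -> : adjmx U = (U ^t*)%sesqui by apply/matrixP => i j; rewrite !mxE.
by split => [/unitarymxP|?]; [|apply/unitarymxP].
Qed.

Lemma unitary_adjl n (U : 'M[C]_n) : U \is unitarymx -> adjmx U *m U = 1%:M.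
Proof. by move/unitary_adj/mulmx1C. Qed.

Lemma unitary_adjr n (U : 'M[C]_n) : U \is unitarymx -> U *m adjmx U = 1%:M.
Proof. by move/unitary_adj. Qed.

Lemma adj_unitary n (U : 'M[C]_n) : U \is unitarymx -> adjmx U \is unitarymx.
Proof. by move=> hU; apply/unitary_adj; rewrite adjmxK unitary_adjl. Qed.

Lemma conj_unitary n (U : 'M[C]_n) : U \is unitarymx -> conjmx_entry U \is unitarymx.
Proof. by move=> hU; rewrite /conjmx_entry conjC_unitary. Qed.

Lemma tr_adj n (A : 'M[C]_n) : \tr (adjmx A) = Num.conj (\tr A).
Proof. by rewrite /mxtrace rmorph_sum; apply: eq_bigr => i _; rewrite mxE. Qed.

Lemma kron_mul m n p q r s (A : 'M[C]_(m,n)) (B : 'M[C]_(p,q)) (A' : 'M[C]_(n, r)) (B' : 'M[C]_(q, s)) :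
  kron A B *m kron A' B' = kron (A *m A') (B *m B').
Proof. exact: tensmx_mul. Qed.

Lemma kron_adj m n p q (A : 'M[C]_(m,n)) (B : 'M[C]_(p,q)) :
  adjmx (kron A B) = kron (adjmx A) (adjmx B).
Proof. by apply/matrixP => i j; rewrite !mxE rmorphM. Qed.

Lemma kron11 m n : kron (1%:M : 'M[C]_m) (1%:M : 'M[C]_n) = 1%:M.
Proof.
apply/matrixP => i j; rewrite !mxE.
case: (mxtens_indexP i) => a b; case: (mxtens_indexP j) => a' b'.
rewrite !mxtens_indexK /=.
have -> : (mxtens_index (a, b) == mxtens_index (a', b')) = ((a == a') && (b == b')).
  apply/eqP/andP => [/(can_inj (@mxtens_indexK _ _)) [-> ->]|[/eqP -> /eqP ->]] //.
by case: (a == a'); case: (b == b'); rewrite ?mulr1n ?mulr0n ?mul0r ?mulr0 ?mulr1.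
Qed.

Lemma kron_unitary m n (A : 'M[C]_m) (B : 'M[C]_n) :
  A \is unitarymx -> B \is unitarymx -> kron A B \is unitarymx.
Proof.
move=> hA hB; apply/unitary_adj.
by rewrite kron_adj kron_mul !unitary_adjr // kron11.
Qed.

Lemma sum_tens m n (F : 'I_(m * n) -> C) :
  \sum_(k < m * n) F k = \sum_(a < m) \sum_(b < n) F (mxtens_index (a, b)).
Proof.
rewrite pair_big /= (reindex (@mxtens_index m n)) /=; last first.
  by exists (@mxtens_unindex m n) => k _; rewrite (mxtens_indexK, mxtens_unindexK).
by apply: eq_bigr => -[a b].
Qed.

End Alg.
Section Alg2.
Variable R : realType.
Local Notation C := (R[i]).

Lemma ReD (x y : C) : complex.Re (x + y) = complex.Re x + complex.Re y. Proof. by case: x; case: y. Qed.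
Lemma ImD (x y : C) : complex.Im (x + y) = complex.Im x + complex.Im y. Proof. by case: x; case: y. Qed.
Lemma ReN (x : C) : complex.Re (- x) = - complex.Re x. Proof. by case: x. Qed.
Lemma ImN (x : C) : complex.Im (- x) = - complex.Im x. Proof. by case: x. Qed.
Lemma ReB (x y : C) : complex.Re (x - y) = complex.Re x - complex.Re y. Proof. by rewrite ReD ReN. Qed.
Lemma ImB (x y : C) : complex.Im (x - y) = complex.Im x - complex.Im y. Proof. by rewrite ImD ImN. Qed.
Lemma ReM (x y : C) : complex.Re (x * y) = complex.Re x * complex.Re y - complex.Im x * complex.Im y. Proof. by case: x; case: y. Qed.
Lemma ImM (x y : C) : complex.Im (x * y) = complex.Re x * complex.Im y + complex.Im x * complex.Re y. Proof. by case: x => a b; case: y => c e /=; rewrite addrC. Qed.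
Lemma ReJ (x : C) : complex.Re (Num.conj x) = complex.Re x. Proof. by case: x. Qed.
Lemma ImJ (x : C) : complex.Im (Num.conj x) = - complex.Im x. Proof. by case: x. Qed.
Lemma Re0 : complex.Re (0 : C) = 0. Proof. by []. Qed.
Lemma Im0 : complex.Im (0 : C) = 0. Proof. by []. Qed.
Lemma Rer (x : R) : complex.Re (x%:C : C) = x. Proof. by []. Qed.
Lemma Imr (x : R) : complex.Im (x%:C : C) = 0. Proof. by []. Qed.
Lemma Re_sum k (F : 'I_k -> C) : complex.Re (\sum_(i < k) F i) = \sum_(i < k) complex.Re (F i).
Proof. exact: (big_morph _ ReD Re0). Qed.
Lemma Im_sum k (F : 'I_k -> C) : complex.Im (\sum_(i < k) F i) = \sum_(i < k) complex.Im (F i).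
Proof. exact: (big_morph _ ImD Im0). Qed.
Lemma ReIm_eq (x y : C) : complex.Re x = complex.Re y -> complex.Im x = complex.Im y -> x = y.
Proof. by case: x => a b; case: y => c e /= -> ->. Qed.
Lemma ReZr (t : R) (x : C) : complex.Re (t%:C * x) = t * complex.Re x.
Proof. by rewrite ReM /= mul0r subr0. Qed.
Lemma ImZr (t : R) (x : C) : complex.Im (t%:C * x) = t * complex.Im x.
Proof. by rewrite ImM /= mul0r addr0. Qed.

Definition nf m n (X : 'M[C]_(m, n)) : R :=
  \sum_(i < m) \sum_(j < n) ((complex.Re (X i j)) ^+ 2 + (complex.Im (X i j)) ^+ 2).
Definition ip m n (X Y : 'M[C]_(m, n)) : R :=
  \sum_(i < m) \sum_(j < n) (complex.Re (X i j) * complex.Re (Y i j) + complex.Im (X i j) * complex.Im (Y i j)).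

Lemma nf_ge0 m n (X : 'M[C]_(m, n)) : 0 <= nf X.
Proof. by apply: sumr_ge0 => i _; apply: sumr_ge0 => j _; rewrite addr_ge0 // sqr_ge0. Qed.

Lemma nf_eq0 m n (X : 'M[C]_(m, n)) : nf X = 0 -> X = 0.
Proof.
move=> /eqP; rewrite psumr_eq0; last by move=> i _; apply: sumr_ge0 => j _; rewrite addr_ge0 // sqr_ge0.
move=> /allP H; apply/matrixP => i j; rewrite mxE.
have := H i (mem_index_enum _); rewrite psumr_eq0; last by move=> *; rewrite addr_ge0 // sqr_ge0.
move=> /allP /(_ j (mem_index_enum _)); rewrite paddr_eq0 ?sqr_ge0 // !sqrf_eq0 => /andP[/eqP h1 /eqP h2].
by apply: ReIm_eq.
Qed.

Lemma ipC m n (X Y : 'M[C]_(m, n)) : ip X Y = ip Y X.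
Proof. by apply: eq_bigr => i _; apply: eq_bigr => j _; rewrite mulrC [complex.Im _ * _]mulrC. Qed.

Lemma ipxx m n (X : 'M[C]_(m, n)) : ip X X = nf X.
Proof. by apply: eq_bigr => i _; apply: eq_bigr => j _; rewrite !expr2. Qed.

Lemma ipDr m n (X Y Z : 'M[C]_(m, n)) : ip X (Y + Z) = ip X Y + ip X Z.
Proof.
rewrite /ip -big_split; apply: eq_bigr => i _; rewrite -big_split; apply: eq_bigr => j _.
rewrite !mxE ReD ImD /=; ring.
Qed.

Lemma ipNr m n (X Y : 'M[C]_(m, n)) : ip X (- Y) = - ip X Y.
Proof.
rewrite /ip -sumrN; apply: eq_bigr => i _; rewrite -sumrN; apply: eq_bigr => j _.
rewrite !mxE ReN ImN /=; ring.
Qed.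

Lemma ipBr m n (X Y Z : 'M[C]_(m, n)) : ip X (Y - Z) = ip X Y - ip X Z.
Proof. by rewrite ipDr ipNr. Qed.

Lemma ipZr m n (t : R) (X Y : 'M[C]_(m, n)) : ip X (t%:C *: Y) = t * ip X Y.
Proof.
rewrite /ip mulr_sumr; apply: eq_bigr => i _; rewrite mulr_sumr; apply: eq_bigr => j _.
rewrite !mxE ReZr ImZr /=; ring.
Qed.

Lemma nfD m n (X Y : 'M[C]_(m, n)) : nf (X + Y) = nf X + nf Y + 2 * ip X Y.
Proof.
rewrite /nf /ip mulr_sumr -!big_split; apply: eq_bigr => i _.
rewrite mulr_sumr -!big_split; apply: eq_bigr => j _.
rewrite !mxE ReD ImD /=; ring.
Qed.

Lemma nfZ m n (t : R) (X : 'M[C]_(m, n)) : nf (t%:C *: X) = t ^+ 2 * nf X.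
Proof.
rewrite /nf mulr_sumr; apply: eq_bigr => i _; rewrite mulr_sumr; apply: eq_bigr => j _.
rewrite !mxE ReZr ImZr /=; ring.
Qed.

Lemma nfN m n (X : 'M[C]_(m, n)) : nf (- X) = nf X.
Proof.
apply: eq_bigr => i _; apply: eq_bigr => j _.
rewrite !mxE ReN ImN /=; ring.
Qed.

Lemma nfB m n (X Y : 'M[C]_(m, n)) : nf (X - Y) = nf (Y - X).
Proof. by rewrite -nfN opprB. Qed.

Lemma nf_line m n (X Y : 'M[C]_(m, n)) (t : R) :
  nf (X + t%:C *: Y) = nf X + 2 * t * ip X Y + t ^+ 2 * nf Y.
Proof. rewrite nfD nfZ ipZr /=; ring. Qed.

Lemma nf_mid m n (X Y : 'M[C]_(m, n)) :
  nf ((2^-1)%:C *: (X + Y)) = 2^-1 * (nf X + nf Y) - 4^-1 * nf (X - Y).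
Proof.
rewrite nfZ nfD [nf (X - Y)]nfD nfN ipNr.
by field.
Qed.

Lemma mulJ (x : C) : x * Num.conj x = ((complex.Re x) ^+ 2 + (complex.Im x) ^+ 2)%:C.
Proof. by case: x => a b; apply: ReIm_eq => /=; ring. Qed.

Lemma tr_nf m n (X : 'M[C]_(m, n)) : \tr (X *m adjmx X) = (nf X)%:C.
Proof.
rewrite /mxtrace /nf rmorph_sum; apply: eq_bigr => i _.
rewrite !mxE rmorph_sum; apply: eq_bigr => j _; by rewrite !mxE mulJ.
Qed.

Lemma nf_unitary_l n p (U : 'M[C]_n) (X : 'M[C]_(n, p)) :
  U \is unitarymx -> nf (U *m X) = nf X.
Proof.
move=> hU; apply: complexI.
by rewrite -!tr_nf adjmx_mul !mulmxA mxtrace_mulC !mulmxA unitary_adjl // mul1mx.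
Qed.

Lemma nf_unitary_r m n (U : 'M[C]_n) (X : 'M[C]_(m, n)) :
  U \is unitarymx -> nf (X *m U) = nf X.
Proof.
move=> hU; apply: complexI.
by rewrite -!tr_nf adjmx_mul mulmxA -[X *m U *m _]mulmxA unitary_adjr // mulmx1.
Qed.

Lemma nf_conj n (U X : 'M[C]_n) : U \is unitarymx -> nf (U *m X *m adjmx U) = nf X.
Proof. by move=> hU; rewrite nf_unitary_r ?adj_unitary // nf_unitary_l. Qed.

Lemma real_eqJ (z : C) : Num.conj z = z -> z = (complex.Re z)%:C.
Proof.
case: z => a b /= [] h; have -> : b = 0 by lra.
by [].
Qed.

Lemma tr_herm n (H S : 'M[C]_n) : Defs.hermitian H -> Defs.hermitian S ->
  \tr (H *m S) = (ip H S)%:C.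
Proof.
move=> hH hS.
have hz : Num.conj (\tr (H *m S)) = \tr (H *m S).
  by rewrite -tr_adj adjmx_mul hH hS mxtrace_mulC.
rewrite {1}(real_eqJ hz); congr (_%:C).
rewrite /mxtrace Re_sum /ip; apply: eq_bigr => i _.
rewrite mxE Re_sum; apply: eq_bigr => j _.
rewrite -{1}hS adjmxE ReM ReJ ImJ /=; ring.
Qed.

Definition vme d (U : 'M[C]_d) : 'cV[C]_(d * d) := kron 1%:M U *m omega d.

Lemma maxentE d (U : 'M[C]_d) : maxent U = vme U *m adjmx (vme U).
Proof.
by rewrite /maxent /vme adjmx_mul kron_adj adjmx1 !mulmxA.
Qed.

Lemma maxent_herm d (U : 'M[C]_d) : Defs.hermitian (maxent U).
Proof. by rewrite /Defs.hermitian maxentE adjmx_mul adjmxK. Qed.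

Definition sq d : C := (sqrtC (d%:R : C))^-1.

Lemma omegaE d a b : omega d (mxtens_index (a, b)) 0 = if a == b then sq d else 0.
Proof. by rewrite mxE mxtens_indexK. Qed.

Lemma kron_omega d (P Q : 'M[C]_d) a b :
  (kron P Q *m omega d) (mxtens_index (a, b)) 0 = sq d * \sum_c (P a c * Q b c).
Proof.
rewrite mxE sum_tens mulr_sumr; apply: eq_bigr => c _.
rewrite (bigD1 c) //= big1 ?addr0; last first.
  by move=> e /negbTE hce; rewrite omegaE eq_sym hce mulr0.
by rewrite omegaE eqxx !mxE !mxtens_indexK /= mulrC.
Qed.

Lemma kron_omega_conj d (V B : 'M[C]_d) :
  kron (conjmx_entry V) B *m omega d = kron 1%:M (B *m adjmx V) *m omega d.
Proof.
apply/matrixP => k z; rewrite [z]ord1; case: (mxtens_indexP k) => a b.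
rewrite !kron_omega; congr (_ * _).
rewrite [in RHS](bigD1 a) //= [in RHS]big1 ?addr0; last first.
  by move=> c /negbTE h; rewrite !mxE eq_sym h mul0r.
rewrite !mxE eqxx mul1r; apply: eq_bigr => c _; rewrite !mxE mulrC.
by [].
Qed.

Lemma maxent_conj d (V W U : 'M[C]_d) :
  kron (conjmx_entry V) W *m maxent U *m adjmx (kron (conjmx_entry V) W)
  = maxent (W *m U *m adjmx V).
Proof.
rewrite !maxentE.
have <- : kron (conjmx_entry V) W *m vme U = vme (W *m U *m adjmx V).
  by rewrite /vme mulmxA kron_mul mulmx1 kron_omega_conj.
by rewrite adjmx_mul !mulmxA.
Qed.
End Alg2.
Section USet.
Variable R : realType.
Local Notation C := (R[i]).

Lemma split_l m n (i : 'I_m) : fintype.split (lshift n i) = inl i.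
Proof. exact: (unsplitK (inl _ i)). Qed.
Lemma split_r m n (i : 'I_n) : fintype.split (rshift m i) = inr i.
Proof. exact: (unsplitK (inr _ i)). Qed.

Lemma sq_real d : Num.conj (sq R d) = sq R d.
Proof.
by apply: conj_Creal; rewrite /sq realV; apply: ger0_real; rewrite sqrtC_ge0 ler0n.
Qed.

Lemma sq_sq d : sq R d * sq R d = (d%:R)^-1.
Proof. by rewrite /sq -invfM -expr2 sqrtCK. Qed.

Lemma tr_maxent d (U : 'M[C]_d) : (0 < d)%N -> U \is unitarymx -> \tr (maxent U) = 1.
Proof.
move=> d0 hU; rewrite maxentE mxtrace_mulC trace_mx11 /vme adjmx_mul.
rewrite kron_adj adjmx1 mulmxA -(mulmxA (adjmx (omega d))) kron_mul mul1mx.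
rewrite unitary_adjl // kron11 mulmx1 mxE sum_tens.
rewrite (eq_bigr (fun _ => sq R d * sq R d)); last first.
  move=> a _; rewrite (bigD1 a) //= big1 ?addr0; last first.
    by move=> b /negbTE hb; rewrite !mxE mxtens_indexK /= eq_sym hb mulr0.
  by rewrite adjmxE omegaE eqxx sq_real.
by rewrite sumr_const card_ord sq_sq -[_ *+ _]mulr_natl mulfV // pnatr_eq0 -lt0n.
Qed.

Lemma tr_rho d (rho : 'M[C]_(d * d)) : (0 < d)%N ->
  ptrace2 rho = (d%:R^-1)%:M -> \tr rho = 1.
Proof.
move=> d0 h; rewrite /mxtrace sum_tens.
rewrite (eq_bigr (fun a => ptrace2 rho a a)); last by move=> a _; rewrite mxE.
rewrite h (eq_bigr (fun _ => d%:R^-1)); last by move=> a _; rewrite mxE eqxx mulr1n.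
by rewrite sumr_const card_ord -[_ *+ _]mulr_natl mulfV // pnatr_eq0 -lt0n.
Qed.

Definition MU d : set 'M[C]_(d * d) :=
  [set maxent U | U in [set U : 'M[C]_d | U \is unitarymx]].

Lemma Uset_herm d (s : 'M[C]_(d * d)) : Uset d s -> Defs.hermitian s.
Proof.
move=> [k [lam [Y [_ _ hY ->]]]].
rewrite /Defs.hermitian adjmx_sum; apply: eq_bigr => i _.
by rewrite adjmxZr; case: (hY i) => U _ <-; rewrite maxent_herm.
Qed.

Lemma Uset_tr d (s : 'M[C]_(d * d)) : (0 < d)%N -> Uset d s -> \tr s = 1.
Proof.
move=> d0 [k [lam [Y [_ hs hY ->]]]].
rewrite raddf_sum /= (eq_bigr (fun i => (lam i)%:C)); last first.
  by move=> i _; rewrite mxtraceZ; case: (hY i) => U hU <-; rewrite tr_maxent // mulr1.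
by rewrite -rmorph_sum hs.
Qed.

Lemma Uset_convex d (s1 s2 : 'M[C]_(d * d)) (t : R) : 0 <= t <= 1 ->
  Uset d s1 -> Uset d s2 -> Uset d (t%:C *: s1 + (1 - t)%:C *: s2).
Proof.
move=> /andP[t0 t1] [k1 [l1 [Y1 [l10 l11 hY1 ->]]]] [k2 [l2 [Y2 [l20 l21 hY2 ->]]]].
exists (k1 + k2)%N.
exists (fun i => match fintype.split i with inl j => t * l1 j | inr j => (1 - t) * l2 j end).
exists (fun i => match fintype.split i with inl j => Y1 j | inr j => Y2 j end).
split.
- move=> i; case: (fintype.split i) => j; apply: mulr_ge0 => //; by rewrite subr_ge0.
- rewrite big_split_ord /=.
  rewrite (eq_bigr (fun j => t * l1 j)); last by move=> j _; rewrite split_l.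
  rewrite [X in _ + X](eq_bigr (fun j => (1 - t) * l2 j)); last by move=> j _; rewrite split_r.
  by rewrite -!mulr_sumr l11 l21 !mulr1 addrC subrK.
- by move=> i; case: (fintype.split i).
- rewrite big_split_ord /= !scaler_sumr; congr (_ + _); apply: eq_bigr => j _;
  by rewrite ?split_l ?split_r scalerA rmorphM.
Qed.

Lemma Uset_inv d (V W : 'M[C]_d) (s : 'M[C]_(d * d)) :
  V \is unitarymx -> W \is unitarymx -> Uset d s ->
  Uset d (kron (conjmx_entry V) W *m s *m adjmx (kron (conjmx_entry V) W)).
Proof.
move=> hV hW [k [lam [Y [l0 l1 hY ->]]]].
exists k, lam.
exists (fun i => kron (conjmx_entry V) W *m Y i *m adjmx (kron (conjmx_entry V) W)).
split => //.
- move=> i; case: (hY i) => U hU <-; exists (W *m U *m adjmx V); last by rewrite maxent_conj.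
  by rewrite /= !mul_unitarymx // adj_unitary.
- rewrite mulmx_sumr mulmx_suml; apply: eq_bigr => i _.
  by rewrite scalemxAl scalemxAr.
Qed.

End USet.
Section Cara.
Variable R : realType.
Local Notation C := (R[i]).

Lemma kernel_nonzero k c (A : 'M[R]_(k, c)) : (c < k)%N ->
  exists mu : 'rV[R]_k, mu != 0 /\ mu *m A = 0.
Proof.
move=> ck.
have hr : (0 < \rank (kermx A))%N.
  rewrite mxrank_ker subn_gt0; apply: leq_ltn_trans (rank_leq_col A) ck.
have [i hi] : exists i, row i (kermx A) != 0.
  apply/boolp.not_existsP => H; move: hr; rewrite (_ : kermx A = 0) ?mxrank0 //.
  apply/row_matrixP => i; rewrite row0; by have := H i; case: eqP.
exists (row i (kermx A)); split => //.
by rewrite -row_mul mulmx_ker row0.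
Qed.

Definition ncar D := (1 + (D * D + D * D))%N.

Lemma affine_dep D k (Y : 'I_k -> 'M[C]_D) : (ncar D < k)%N ->
  exists mu : 'I_k -> R, (exists i, 0 < mu i) /\ \sum_i mu i = 0 /\
     \sum_i (mu i)%:C *: Y i = 0.
Proof.
move=> hk.
pose A : 'M[R]_(k, ncar D) := row_mx (const_mx 1 : 'M_(k, 1))
   (row_mx (\matrix_(i, j) complex.Re (mxvec (Y i) 0 j))
           (\matrix_(i, j) complex.Im (mxvec (Y i) 0 j))).
have [mu [mu0 hmu]] := kernel_nonzero A hk.
have col j : \sum_i mu 0 i * A i j = 0.
  by have := congr1 (fun M : 'M[R]_(1, ncar D) => M 0 j) hmu; rewrite !mxE.
have hs : \sum_i mu 0 i = 0.
  rewrite -[RHS](col (lshift _ 0)); apply: eq_bigr => i _.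
  by rewrite /A row_mxEl mxE mulr1.
exists (fun i => mu 0 i); split; last split => //.
- apply/boolp.not_existsP => hn.
  have hle i : mu 0 i <= 0 by rewrite leNgt; apply/negP => hi; exact: hn i hi.
  have : \sum_i (- mu 0 i) = 0 by rewrite sumrN hs oppr0.
  move/eqP; rewrite psumr_eq0; last by move=> i _; rewrite oppr_ge0.
  move/allP => hz; move/negP: mu0; apply; apply/eqP/matrixP => z i.
  rewrite [z]ord1 mxE; have := hz i (mem_index_enum _).
  by rewrite oppr_eq0 => /eqP.
- apply/matrixP => a b; rewrite summxE mxE; apply: ReIm_eq.
  + rewrite Re_sum Re0 -[RHS](col (rshift 1 (lshift _ (mxvec_index a b)))).
    apply: eq_bigr => i _; rewrite /A row_mxEr row_mxEl !mxE mxvecE.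
    by rewrite ReZr.
  + rewrite Im_sum Im0 -[RHS](col (rshift 1 (rshift _ (mxvec_index a b)))).
    apply: eq_bigr => i _; rewrite /A row_mxEr row_mxEr !mxE mxvecE.
    by rewrite ImZr.
Qed.

Lemma cara_step D (S : set 'M[C]_D) k (lam : 'I_k.+1 -> R) (Y : 'I_k.+1 -> 'M[C]_D) :
  (ncar D < k.+1)%N -> (forall i, 0 <= lam i) -> \sum_i lam i = 1 ->
  (forall i, S (Y i)) ->
  exists (lam' : 'I_k -> R) (Y' : 'I_k -> 'M[C]_D),
    [/\ (forall i, 0 <= lam' i), \sum_i lam' i = 1, (forall i, S (Y' i)) &
        \sum_i (lam' i)%:C *: Y' i = \sum_i (lam i)%:C *: Y i].
Proof.
move=> hk l0 l1 hY.
have [mu [[i0 hi0] [ms my]]] := affine_dep Y hk.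
case: (@arg_minP _ _ _ i0 [pred i | 0 < mu i] (fun i => lam i / mu i) hi0) => j hj hmin.
set t := lam j / mu j.
have t0 : 0 <= t by rewrite divr_ge0 // ltW.
pose l i := lam i - t * mu i.
have lj : l j = 0 by rewrite /l /t divfK ?subrr // gt_eqF.
have lge i : 0 <= l i.
  rewrite /l subr_ge0; case: (ltP 0 (mu i)) => hi.
  - by have := hmin i hi; rewrite ler_pdivlMr.
  - by apply: le_trans (l0 i); apply: mulr_ge0_le0.
have lsum : \sum_i l i = 1.
  by rewrite /l sumrB -mulr_sumr ms mulr0 subr0.
have lY : \sum_i (l i)%:C *: Y i = \sum_i (lam i)%:C *: Y i.
  rewrite /l (eq_bigr (fun i => (lam i)%:C *: Y i - t%:C *: ((mu i)%:C *: Y i))); last first.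
    by move=> i _; rewrite rmorphB rmorphM scalerBl scalerA.
  by rewrite sumrB -scaler_sumr my scaler0 subr0.
exists (fun i => l (lift j i)), (fun i => Y (lift j i)); split => //.
- by move: lsum; rewrite (bigD1_ord j) //= lj add0r.
- by rewrite -lY (bigD1_ord j) //= lj scale0r add0r.
Qed.

Lemma cara D (S : set 'M[C]_D) (x : 'M[C]_D) : conv S x ->
  exists (lam : 'I_(ncar D) -> R) (Y : 'I_(ncar D) -> 'M[C]_D),
    [/\ (forall i, 0 <= lam i), \sum_i lam i = 1, (forall i, S (Y i)) &
        x = \sum_i (lam i)%:C *: Y i].
Proof.
move=> [k [lam [Y [l0 l1 hY ->]]]].
elim: k lam Y l0 l1 hY => [|k IH] lam Y l0 l1 hY.
  by move: l1; rewrite big_ord0 => /eqP; rewrite eq_sym oner_eq0.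
case: (ltnP (ncar D) k.+1) => hk.
  have [l' [Y' [l0' l1' hY' <-]]] := cara_step hk l0 l1 hY.
  exact: IH.
pose L (i : nat) := if (i < k.+1)%N then lam (inord i) else 0.
pose YY (i : nat) := if (i < k.+1)%N then Y (inord i) else Y ord0.
exists (fun i => L i), (fun i => YY i); split.
- by move=> i; rewrite /L; case: ifP.
- have e1 : \sum_(i < k.+1) lam i = \sum_(i < k.+1) lam (inord i).
    by apply: eq_bigr => i _; rewrite inord_val.
  rewrite -l1 e1 (big_ord_widen (ncar D) (fun i => lam (inord i))) // [RHS]big_mkcond.
  apply: eq_bigr => i _; rewrite /L; by case: ifP.
- by move=> i; rewrite /YY; case: ifP.
- have e1 : \sum_(i < k.+1) (lam i)%:C *: Y i = \sum_(i < k.+1) (lam (inord i))%:C *: Y (inord i).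
    by apply: eq_bigr => i _; rewrite inord_val.
  rewrite e1 (big_ord_widen (ncar D) (fun i => (lam (inord i))%:C *: Y (inord i))) //.
  rewrite [LHS]big_mkcond /=; apply: eq_bigr => i _; rewrite /L /YY.
  by case: ifP => // _; rewrite scale0r.
Qed.

End Cara.
Section Cts.
Variable R : realType.
Local Notation C := (R[i]).
Variable T : topologicalType.

Lemma cD (f g : T -> R) : continuous f -> continuous g -> continuous (fun p => f p + g p).
Proof. by move=> hf hg x; apply: continuousD; [exact: hf|exact: hg]. Qed.
Lemma cM (f g : T -> R) : continuous f -> continuous g -> continuous (fun p => f p * g p).
Proof. by move=> hf hg x; apply: continuousM; [exact: hf|exact: hg]. Qed.
Lemma cN (f : T -> R) : continuous f -> continuous (fun p => - f p).
Proof. by move=> hf x; apply: continuousN; exact: hf. Qed.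
Lemma cB (f g : T -> R) : continuous f -> continuous g -> continuous (fun p => f p - g p).
Proof. by move=> hf hg; apply: cD => //; apply: cN. Qed.
Lemma cC (c : R) : continuous (fun _ : T => c).
Proof. exact: cst_continuous. Qed.
Lemma cS k (F : 'I_k -> T -> R) : (forall i, continuous (F i)) ->
  continuous (fun p => \sum_(i < k) F i p).
Proof.
elim: k F => [|k IH] F hF.
  by rewrite (_ : (fun p => _) = (fun _ => 0)); [apply: cC|apply: boolp.funext => p; rewrite big_ord0].
rewrite (_ : (fun p => _) = (fun p => \sum_(i < k) F (lift ord0 i) p + F ord0 p)).
  by apply: cD => //; apply: IH => i.
by apply: boolp.funext => p; rewrite big_ord_recl addrC.
Qed.

Definition ctsC (f : T -> C) :=
  continuous (fun p => complex.Re (f p)) /\ continuous (fun p => complex.Im (f p)).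
Definition ctsM m n (F : T -> 'M[C]_(m, n)) := forall i j, ctsC (fun p => F p i j).

Lemma ctsC_mk (a b : T -> R) : continuous a -> continuous b -> ctsC (fun p => a p +i* b p).
Proof. by []. Qed.
Lemma ctsC_r (a : T -> R) : continuous a -> ctsC (fun p => (a p)%:C).
Proof. by move=> ha; split => //=; apply: cC. Qed.
Lemma ctsC_C (c : C) : ctsC (fun _ => c).
Proof. by split; apply: cC. Qed.
Lemma ctsC_D (f g : T -> C) : ctsC f -> ctsC g -> ctsC (fun p => f p + g p).
Proof.
move=> [f1 f2] [g1 g2]; split.
  by rewrite (_ : (fun p => _) = (fun p => complex.Re (f p) + complex.Re (g p))); [apply: cD|apply: boolp.funext => p; rewrite ReD].
by rewrite (_ : (fun p => _) = (fun p => complex.Im (f p) + complex.Im (g p))); [apply: cD|apply: boolp.funext => p; rewrite ImD].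
Qed.
Lemma ctsC_N (f : T -> C) : ctsC f -> ctsC (fun p => - f p).
Proof.
move=> [f1 f2]; split.
  by rewrite (_ : (fun p => _) = (fun p => - complex.Re (f p))); [apply: cN|apply: boolp.funext => p; rewrite ReN].
by rewrite (_ : (fun p => _) = (fun p => - complex.Im (f p))); [apply: cN|apply: boolp.funext => p; rewrite ImN].
Qed.
Lemma ctsC_M (f g : T -> C) : ctsC f -> ctsC g -> ctsC (fun p => f p * g p).
Proof.
move=> [f1 f2] [g1 g2]; split.
  rewrite (_ : (fun p => _) = (fun p => complex.Re (f p) * complex.Re (g p) - complex.Im (f p) * complex.Im (g p))).
    by apply: cB; apply: cM.
  by apply: boolp.funext => p; rewrite ReM.
rewrite (_ : (fun p => _) = (fun p => complex.Re (f p) * complex.Im (g p) + complex.Im (f p) * complex.Re (g p))).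
  by apply: cD; apply: cM.
by apply: boolp.funext => p; rewrite ImM.
Qed.
Lemma ctsC_J (f : T -> C) : ctsC f -> ctsC (fun p => Num.conj (f p)).
Proof.
move=> [f1 f2]; split.
  by rewrite (_ : (fun p => _) = (fun p => complex.Re (f p))); [|apply: boolp.funext => p; rewrite ReJ].
by rewrite (_ : (fun p => _) = (fun p => - complex.Im (f p))); [apply: cN|apply: boolp.funext => p; rewrite ImJ].
Qed.
Lemma ctsC_S k (F : 'I_k -> T -> C) : (forall i, ctsC (F i)) ->
  ctsC (fun p => \sum_(i < k) F i p).
Proof.
move=> hF; split.
  rewrite (_ : (fun p => _) = (fun p => \sum_(i < k) complex.Re (F i p))).
    by apply: cS => i; case: (hF i).
  by apply: boolp.funext => p; rewrite Re_sum.
rewrite (_ : (fun p => _) = (fun p => \sum_(i < k) complex.Im (F i p))).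
  by apply: cS => i; case: (hF i).
by apply: boolp.funext => p; rewrite Im_sum.
Qed.

Lemma ctsM_C m n (A : 'M[C]_(m, n)) : ctsM (fun _ => A).
Proof. by move=> i j; apply: ctsC_C. Qed.
Lemma ctsM_D m n (F G : T -> 'M[C]_(m, n)) : ctsM F -> ctsM G -> ctsM (fun p => F p + G p).
Proof.
move=> hF hG i j; rewrite (_ : (fun p => _) = (fun p => F p i j + G p i j)).
  by apply: ctsC_D.
by apply: boolp.funext => p; rewrite mxE.
Qed.
Lemma ctsM_N m n (F : T -> 'M[C]_(m, n)) : ctsM F -> ctsM (fun p => - F p).
Proof.
move=> hF i j; rewrite (_ : (fun p => _) = (fun p => - F p i j)).
  by apply: ctsC_N.
by apply: boolp.funext => p; rewrite mxE.
Qed.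
Lemma ctsM_B m n (F G : T -> 'M[C]_(m, n)) : ctsM F -> ctsM G -> ctsM (fun p => F p - G p).
Proof. by move=> hF hG; apply: ctsM_D => //; apply: ctsM_N. Qed.
Lemma ctsM_mul m n q (F : T -> 'M[C]_(m, n)) (G : T -> 'M[C]_(n, q)) :
  ctsM F -> ctsM G -> ctsM (fun p => F p *m G p).
Proof.
move=> hF hG i j; rewrite (_ : (fun p => _) = (fun p => \sum_k (F p i k * G p k j))).
  by apply: ctsC_S => k; apply: ctsC_M.
by apply: boolp.funext => p; rewrite mxE.
Qed.
Lemma ctsM_adj m n (F : T -> 'M[C]_(m, n)) : ctsM F -> ctsM (fun p => adjmx (F p)).
Proof.
move=> hF i j; rewrite (_ : (fun p => _) = (fun p => Num.conj (F p j i))).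
  by apply: ctsC_J.
by apply: boolp.funext => p; rewrite mxE.
Qed.
Lemma ctsM_kron m n q r (F : T -> 'M[C]_(m, n)) (G : T -> 'M[C]_(q, r)) :
  ctsM F -> ctsM G -> ctsM (fun p => kron (F p) (G p)).
Proof.
move=> hF hG i j; rewrite (_ : (fun p => _) = (fun p => F p (mxtens_unindex i).1 (mxtens_unindex j).1 * G p (mxtens_unindex i).2 (mxtens_unindex j).2)).
  by apply: ctsC_M.
by apply: boolp.funext => p; rewrite mxE.
Qed.
Lemma ctsM_Z m n (f : T -> C) (F : T -> 'M[C]_(m, n)) :
  ctsC f -> ctsM F -> ctsM (fun p => f p *: F p).
Proof.
move=> hf hF i j; rewrite (_ : (fun p => _) = (fun p => f p * F p i j)).
  by apply: ctsC_M.
by apply: boolp.funext => p; rewrite mxE.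
Qed.
Lemma ctsM_S k m n (F : 'I_k -> T -> 'M[C]_(m, n)) : (forall i, ctsM (F i)) ->
  ctsM (fun p => \sum_(i < k) F i p).
Proof.
move=> hF i j; rewrite (_ : (fun p => _) = (fun p => \sum_(l < k) F l p i j)).
  by apply: ctsC_S => l; apply: hF.
by apply: boolp.funext => p; rewrite summxE.
Qed.
Lemma ctsM_maxent d (F : T -> 'M[C]_d) : ctsM F -> ctsM (fun p => maxent (F p)).
Proof.
move=> hF; rewrite /maxent; apply: ctsM_mul; last by apply: ctsM_kron; [apply: ctsM_C|apply: ctsM_adj].
by apply: ctsM_mul; [apply: ctsM_kron => //; apply: ctsM_C|apply: ctsM_C].
Qed.

Lemma cts_nf m n (F : T -> 'M[C]_(m, n)) : ctsM F -> continuous (fun p => nf (F p)).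
Proof.
move=> hF; apply: cS => i; apply: cS => j; case: (hF i j) => h1 h2.
by apply: cD; rewrite /GRing.exp /=; apply: cM.
Qed.

End Cts.
Section Param.
Variable R : realType.
Local Notation C := (R[i]).
Variables d N : nat.

Definition Mp := (N + (N * (d * d) + N * (d * d)))%N.
Definition lamg (g : 'I_Mp -> R) (i : 'I_N) : R := g (lshift _ i).
Definition Ug (g : 'I_Mp -> R) (i : 'I_N) : 'M[C]_d :=
  \matrix_(a, b) (g (rshift N (lshift _ (mxtens_index (i, mxtens_index (a, b))))) +i*
                  g (rshift N (rshift _ (mxtens_index (i, mxtens_index (a, b)))))).
Definition decg (g : 'I_Mp -> R) : 'M[C]_(d * d) :=
  \sum_i (lamg g i)%:C *: maxent (Ug g i).
Definition goodg (g : 'I_Mp -> R) : Prop :=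
  [/\ forall i, 0 <= lamg g i, \sum_i lamg g i = 1 & forall i, Ug g i \is unitarymx].

Lemma decg_U g : goodg g -> Uset d (decg g).
Proof.
case=> l0 l1 hU; exists N, (lamg g), (fun i => maxent (Ug g i)); split => // i.
by apply: imageP; exact: hU.
Qed.

Definition encg (lam : 'I_N -> R) (Us : 'I_N -> 'M[C]_d) : 'I_Mp -> R :=
  fun j => match fintype.split j with
  | inl i => lam i
  | inr k => match fintype.split k with
     | inl k' => let u := mxtens_unindex k' in
                 complex.Re (Us u.1 (mxtens_unindex u.2).1 (mxtens_unindex u.2).2)
     | inr k' => let u := mxtens_unindex k' in
                 complex.Im (Us u.1 (mxtens_unindex u.2).1 (mxtens_unindex u.2).2)
     end
  end.

Lemma encg_lam lam Us i : lamg (encg lam Us) i = lam i.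
Proof. by rewrite /lamg /encg split_l. Qed.

Lemma encg_U lam Us i : Ug (encg lam Us) i = Us i.
Proof.
apply/matrixP => a b; rewrite mxE /encg !(@split_r N (N * (d * d) + N * (d * d))).
rewrite (@split_l (N * (d * d)) (N * (d * d))) (@split_r (N * (d * d)) (N * (d * d))) !mxtens_indexK /=.
by case: (Us i a b).
Qed.

Lemma encode (s : 'M[C]_(d * d)) : Uset d s -> N = ncar (d * d) ->
  exists g, goodg g /\ decg g = s.
Proof.
move=> hs hN; have [lam [Y [l0 l1 hY ->]]] := cara hs.
have [Us hUs] : exists Us : 'I_(ncar (d * d)) -> 'M[C]_d,
    forall i, Us i \is unitarymx /\ maxent (Us i) = Y i.
  apply: (@fin_all_exists _ (fun _ => 'M[C]_d) (fun i U => U \is unitarymx /\ maxent U = Y i)) => i.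
  by have [U hU <-] := hY i; exists U.
move: lam Y Us l0 l1 hY hUs; rewrite -hN => lam Y Us l0 l1 hY hUs.
exists (encg lam Us); split.
  split.
  - by move=> i; rewrite encg_lam.
  - by under eq_bigr do rewrite encg_lam.
  - by move=> i; rewrite encg_U; case: (hUs i).
rewrite /decg; apply: eq_bigr => i _; rewrite encg_lam encg_U.
by case: (hUs i) => _ ->.
Qed.

Lemma unit_entry (U : 'M[C]_d) a b : U \is unitarymx ->
  -1 <= complex.Re (U a b) <= 1 /\ -1 <= complex.Im (U a b) <= 1.
Proof.
move=> /unitary_adjr hU.
have := congr1 (fun M : 'M[C]_d => M a a) hU; rewrite !mxE eqxx /=.
rewrite (eq_bigr (fun b => ((complex.Re (U a b)) ^+ 2 + (complex.Im (U a b)) ^+ 2)%:C)); last first.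
  by move=> c _; rewrite mxE mulJ.
rewrite -rmorph_sum => /complexI hs.
have : (complex.Re (U a b)) ^+ 2 + (complex.Im (U a b)) ^+ 2 <= 1.
  rewrite -hs (bigD1 b) //= lerDl; apply: sumr_ge0 => c _; by rewrite addr_ge0 ?sqr_ge0.
move=> h; have h1 := sqr_ge0 (complex.Re (U a b)); have h2 := sqr_ge0 (complex.Im (U a b)).
by split; apply/andP; split; nra.
Qed.

Lemma goodg_box g : goodg g -> forall j, -1 <= g j <= 1.
Proof.
case=> l0 l1 hU j; rewrite -(splitK j); case: (fintype.split j) => [i|k] /=.
  have h0 := l0 i; rewrite /lamg in h0; rewrite (le_trans _ h0) ?lerN10 //=.
  rewrite -l1 (bigD1 i) //= lerDl; apply: sumr_ge0 => c _; exact: l0.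
rewrite -(splitK k); case: (fintype.split k) => [k'|k'] /=;
  case: (mxtens_indexP k') => i ab; case: (mxtens_indexP ab) => a b;
  have [h1 h2] := unit_entry a b (hU i); move: h1 h2; rewrite mxE //.
Qed.

End Param.

Section Topo.
Variable R : realType.
Local Notation C := (R[i]).

Lemma closed_forall (T : topologicalType) (I : Type) (P : I -> T -> Prop) :
  (forall i, closed [set p | P i p]) -> closed [set p | forall i, P i p].
Proof.
move=> h; have := @closed_bigI T I setT (fun i => [set p | P i p]) (fun i _ => h i).
congr closed; apply/seteqP; split => p /= hp i.
- exact: (hp i Logic.I).
- by move=> _; apply: hp.
Qed.

Lemma closed_preim_eq (T : topologicalType) (f : T -> R) (c : R) :
  continuous f -> closed [set p | f p = c].
Proof. by move=> hf; exact: ((continuous_closedP f).1 hf _ (@closed_eq R c)). Qed.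

Lemma closed_preim_ge (T : topologicalType) (f : T -> R) :
  continuous f -> closed [set p | 0 <= f p].
Proof. by move=> hf; exact: ((continuous_closedP f).1 hf _ (@closed_ge R 0)). Qed.

Variables d N P : nat.
Variable emb : 'I_(Mp d N) -> 'I_P.
Local Notation gp p := (fun j => (p : 'rV[R]_P) 0 (emb j)).

Lemma cts_coord j : continuous (fun p : 'rV[R]_P => p 0 (emb j)).
Proof. exact: coord_continuous. Qed.

Lemma ctsM_Ug i : ctsM (fun p : 'rV[R]_P => Ug (gp p) i).
Proof.
move=> a b; rewrite (_ : (fun p => _) = (fun p : 'rV[R]_P => p 0 (emb (rshift N (lshift _ (mxtens_index (i, mxtens_index (a, b)))))) +i* p 0 (emb (rshift N (rshift _ (mxtens_index (i, mxtens_index (a, b)))))))).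
  by apply: ctsC_mk; apply: cts_coord.
by apply: boolp.funext => p; rewrite mxE.
Qed.

Lemma ctsM_decg : ctsM (fun p : 'rV[R]_P => decg (gp p)).
Proof.
apply: ctsM_S => i; apply: ctsM_Z; first by apply: ctsC_r; apply: cts_coord.
by apply: ctsM_maxent; apply: ctsM_Ug.
Qed.

Lemma closed_good : closed [set p : 'rV[R]_P | goodg (gp p)].
Proof.
have e : [set p : 'rV[R]_P | goodg (gp p)] =
  [set p | forall i, 0 <= lamg (gp p) i] `&` [set p | \sum_i lamg (gp p) i = 1] `&`
  [set p | forall i, nf (Ug (gp p) i *m adjmx (Ug (gp p) i) - 1%:M) = 0].
  apply/seteqP; split => p /=.
    case=> l0 l1 hU; split; [split|] => // i.
    by rewrite (unitary_adjr (hU i)) subrr; apply/eqP; rewrite -[_ == _]/(nf 0 == 0) /nf; apply/eqP; do 2 (apply: big1 => ? _); rewrite mxE /= expr0n /= addr0.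
  move=> [[l0 l1] hU]; split => // i; apply/unitary_adj; apply/eqP; rewrite -subr_eq0; apply/eqP.
  exact: nf_eq0.
rewrite e; apply: closedI; first apply: closedI.
- apply: closed_forall => i; apply: closed_preim_ge; exact: cts_coord.
- apply: closed_preim_eq; apply: cS => i; exact: cts_coord.
- apply: closed_forall => i; apply: closed_preim_eq; apply: cts_nf.
  apply: ctsM_B; last exact: ctsM_C.
  by apply: ctsM_mul; [|apply: ctsM_adj]; apply: ctsM_Ug.
Qed.

End Topo.

Section EVT.
Variable R : realType.

Lemma evt_box P (S : set 'rV[R]_P) (f : 'rV[R]_P -> R) :
  closed S -> (forall p, S p -> forall j, -1 <= p 0 j <= 1) -> S !=set0 ->
  continuous f -> exists2 c, S c & forall t, S t -> f c <= f t.
Proof.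
move=> cS box nS cf.
have cB : compact [set v : 'rV[R]_P | forall i, `[(-1 : R), 1]%classic (v ord0 i)].
  exact: (@rV_compact R P (fun=> `[(-1 : R), 1]%classic) (fun _ => @segment_compact R _ _)).
have sub : S `<=` [set v : 'rV[R]_P | forall i, `[(-1 : R), 1]%classic (v ord0 i)].
  by move=> p hp i /=; rewrite in_itv /=; exact: box.
have cK := subclosed_compact cS cB sub.
have [c hc hm] := compact_EVT_min nS cK (continuous_subspaceT cf).
exists c; first by rewrite -in_setE.
by move=> t ht; apply: hm; rewrite in_setE.
Qed.

End EVT.
Section Main.
Variable R : realType.
Local Notation C := (R[i]).

Lemma half_eq : (1 - 2^-1 : R) = 2^-1. Proof. by field. Qed.

Lemma half_mid m n (A B : 'M[C]_(m, n)) :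
  (2^-1 : R)%:C *: A + (1 - 2^-1 : R)%:C *: B = (2^-1 : R)%:C *: (A + B).
Proof. by rewrite half_eq scalerDr. Qed.

Lemma half_sub m n (A B Z : 'M[C]_(m, n)) :
  (2^-1 : R)%:C *: (A + B) - Z = (2^-1 : R)%:C *: ((A - Z) + (B - Z)).
Proof.
rewrite !scalerDr !scalerN addrACA -opprD -scalerDl -rmorphD.
by rewrite (_ : 2^-1 + 2^-1 = 1 :> R) ?scale1r //; field.
Qed.

Lemma var_real (a b : R) : 0 <= b -> (forall t, 0 < t <= 1 -> 0 <= 2 * t * a + t ^+ 2 * b) -> 0 <= a.
Proof.
move=> b0 h; rewrite leNgt; apply/negP => a0.
set s := - a.
have s0 : 0 < s by rewrite /s oppr_gt0.
set t := s / (s + b).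
have sb0 : 0 < s + b by rewrite ltr_wpDr.
have t0 : 0 < t by rewrite divr_gt0.
have t1 : t <= 1 by rewrite ler_pdivrMr // mul1r lerDl.
have tb : t * b <= s.
  rewrite /t mulrAC ler_pdivrMr //; nra.
have := h t; rewrite t0 t1 => /(_ isT).
have -> : a = - s by rewrite /s opprK.
nra.
Qed.

Variables (T : Type) (d : nat) (V Vt : T -> 'M[C]_d) (rho : 'M[C]_(d * d)).
Hypothesis d0 : (0 < d)%N.
Hypothesis hV : forall g, V g \is unitarymx.
Hypothesis hVt : forall g, Vt g \is unitarymx.
Hypothesis hS : Sset d rho.
Hypothesis hG : commutant d V Vt rho.

Local Notation Yg g := (kron (conjmx_entry (V g)) (Vt g)).

Lemma Yg_unitary g : Yg g \is unitarymx.
Proof. by apply: kron_unitary; [apply: conj_unitary|]. Qed.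

Lemma comm_conj X g : X *m Yg g = Yg g *m X -> Yg g *m X *m adjmx (Yg g) = X.
Proof. by move=> h; rewrite -h -mulmxA unitary_adjr ?mulmx1 // Yg_unitary. Qed.

Lemma conj_comm X g : Yg g *m X *m adjmx (Yg g) = X -> X *m Yg g = Yg g *m X.
Proof.
move=> h; rewrite -{1}h -!mulmxA (unitary_adjl (Yg_unitary g)) mulmx1.
by [].
Qed.

Lemma rho_herm : Defs.hermitian rho.
Proof. by case: hS => -[]. Qed.

Lemma rho_inv g : Yg g *m rho *m adjmx (Yg g) = rho.
Proof. by apply: comm_conj; have := hG g. Qed.

Local Notation N := (ncar (d * d)).
Local Notation M := (Mp d N).

Lemma U_nonempty : Uset d (maxent (1%:M : 'M[C]_d)).
Proof.
exists 1%N, (fun _ => 1), (fun _ => maxent 1%:M); split => //.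
- by rewrite big_ord1.
- by move=> i; apply: imageP; rewrite /= unitary_adj mul1mx adjmx1.
- by rewrite big_ord1 scale1r.
Qed.

Lemma row_g P (g : 'I_P -> R) : (fun j => (\row_j g j : 'rV[R]_P) 0 j) = g.
Proof. by apply: boolp.funext => j; rewrite mxE. Qed.

Lemma nearest : exists s, Uset d s /\ forall s', Uset d s' -> nf (s - rho) <= nf (s' - rho).
Proof.
pose S := [set p : 'rV[R]_M | goodg (fun j => p 0 j)].
have cS : closed S by exact: (@closed_good R d N M id).
have bS : forall p, S p -> forall j, -1 <= p 0 j <= 1 by move=> p hp j; exact: goodg_box hp j.
have [g0 [hg0 _]] := encode U_nonempty (erefl N).
have nS : S !=set0 by exists (\row_j g0 j); rewrite /S /= row_g.
have cf : continuous (fun p : 'rV[R]_M => nf (decg (fun j => p 0 j) - rho)).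
  by apply: cts_nf; apply: ctsM_B; [exact: (@ctsM_decg R d N M id)|apply: ctsM_C].
have [c hc hmin] := evt_box cS bS nS cf.
exists (decg (fun j => c 0 j)); split; first exact: decg_U.
move=> s' hs'; have [g [hg <-]] := encode hs' (erefl N).
have := hmin (\row_j g j); rewrite /S /= row_g; exact.
Qed.

Lemma nearest_unique s1 s2 : Uset d s1 -> Uset d s2 ->
  (forall s', Uset d s' -> nf (s1 - rho) <= nf (s' - rho)) ->
  (forall s', Uset d s' -> nf (s2 - rho) <= nf (s' - rho)) -> s1 = s2.
Proof.
move=> h1 h2 m1 m2.
have hm := Uset_convex (t := 2^-1) _ h1 h2.
have : 0 <= (2^-1 : R) <= 1 by apply/andP; split; [|rewrite invf_le1]; rewrite ?ler1n ?ltr0n.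
move=> /hm {}hm; rewrite half_mid in hm.
have e1 := m1 _ hm; have e2 := m1 _ h2; have e3 := m2 _ h1.
rewrite half_sub nf_mid in e1.
have hz : nf (s1 - rho - (s2 - rho)) = 0.
  apply/eqP; rewrite eq_le nf_ge0 andbT.
  have -> : s1 - rho - (s2 - rho) = s1 - s2 by rewrite opprB addrA subrK.
  rewrite (_ : s1 - rho - (s2 - rho) = s1 - s2) in e1; last by rewrite opprB addrA subrK.
  by lra.
apply/eqP; rewrite -subr_eq0; apply/eqP; apply: nf_eq0.
by move: hz; rewrite opprB addrA subrK.
Qed.

Lemma partA : (forall W, Wset d W -> commutant d V Vt W -> 0 <= \tr (W *m rho)) -> Uset d rho.
Proof.
move=> hW; case: (boolp.pselect (Uset d rho)) => // hn; exfalso.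
have [s [hs hmin]] := nearest.
have sG g : s *m Yg g = Yg g *m s.
  apply: conj_comm; apply: (nearest_unique _ hs) => //.
  - exact: Uset_inv.
  - move=> s' hs'; apply: le_trans (hmin _ hs').
    by rewrite -{1}(rho_inv g) -mulmxBl -mulmxBr nf_conj ?Yg_unitary.
have hsh := Uset_herm hs.
have hrh := rho_herm.
have hsr : Defs.hermitian (s - rho) by rewrite /Defs.hermitian adjmxB hsh hrh.
set c := ip (s - rho) s.
set W := (s - rho) - (c%:C)%:M.
have var s' : Uset d s' -> 0 <= ip (s - rho) (s' - s).
  move=> hs'; apply: (var_real (b := nf (s' - s))); first exact: nf_ge0.
  move=> t /andP[t0 t1].
  have hst := Uset_convex (t := t) _ hs' hs; rewrite ltW ?t1 //= in hst.
  have := hmin _ (hst isT).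
  have -> : t%:C *: s' + (1 - t)%:C *: s - rho = (s - rho) + t%:C *: (s' - s).
    by apply/matrixP => i j; rewrite !mxE rmorphB rmorph1 /=; ring.
  rewrite nf_line; lra.
have trW s' : Defs.hermitian s' -> \tr (W *m s') = (ip (s - rho) s' - c)%:C * 1 + c%:C * (1 - \tr s').
  move=> hs'; rewrite /W mulmxBl raddfB /= mul_scalar_mx mxtraceZ tr_herm //.
  by rewrite rmorphB; ring.
have WW : Wset d W.
  split.
    by rewrite /Defs.hermitian /W adjmxB hsr adjmx_scalar conjCr.
  move=> s' hs'; rewrite trW ?Uset_tr ?subrr ?mulr0 ?addr0 ?mulr1 //; last exact: Uset_herm.
  by rewrite ler0c /c -ipBr; apply: var.
have WG : commutant d V Vt W.
  move=> g /=; rewrite /W !mulmxBl !mulmxBr sG.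
  by have := hG g => /= ->; rewrite scalar_mxC.
have := hW W WW WG; rewrite trW // (tr_rho d0); last by case: hS => _ [].
rewrite subrr mulr0 addr0 mulr1 ler0c /c -ipBr -[rho - s]opprB ipNr ipxx oppr_ge0 => hle.
apply: hn; have : nf (s - rho) = 0 by apply/eqP; rewrite eq_le hle nf_ge0.
move/nf_eq0/eqP; rewrite subr_eq0 => /eqP <-; exact: hs.
Qed.

Definition feas (a : R * R) (Z1 Z2 : 'M[C]_(d * d)) :=
  [/\ Uset d Z1, Uset d Z2 & rho = a.1%:C *: Z1 - a.2%:C *: Z2].

Lemma feas_min a : feas a =2 feas a -> forall sp sn, feas a sp sn ->
  exists X1 X2, feas a X1 X2 /\
   forall Z1 Z2, feas a Z1 Z2 -> nf X1 + nf X2 <= nf Z1 + nf Z2.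
Proof.
move=> _ sp sn [hsp hsn hr].
pose P := (M + M)%N.
pose g1 (p : 'rV[R]_P) := fun j => p 0 (lshift M j).
pose g2 (p : 'rV[R]_P) := fun j => p 0 (rshift M j).
pose S := [set p : 'rV[R]_P | goodg (g1 p)] `&` [set p | goodg (g2 p)] `&`
  [set p | nf (a.1%:C *: decg (g1 p) - a.2%:C *: decg (g2 p) - rho) = 0].
have c1 : ctsM (fun p : 'rV[R]_P => decg (g1 p)) by exact: (@ctsM_decg R d N P (lshift M)).
have c2 : ctsM (fun p : 'rV[R]_P => decg (g2 p)) by exact: (@ctsM_decg R d N P (@rshift M M)).
have cS : closed S.
  apply: closedI; first apply: closedI.
  - exact: (@closed_good R d N P (lshift M)).
  - exact: (@closed_good R d N P (@rshift M M)).
  - apply: closed_preim_eq; apply: cts_nf; apply: ctsM_B; last exact: ctsM_C.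
    by apply: ctsM_B; apply: ctsM_Z => //; apply: ctsC_C.
have bS : forall p, S p -> forall j, -1 <= p 0 j <= 1.
  move=> p [[h1 h2] _] j; rewrite -(splitK j); case: (fintype.split j) => j' /=.
  - exact: (goodg_box h1 j').
  - exact: (goodg_box h2 j').
have enc : forall Z1 Z2, feas a Z1 Z2 -> exists p, S p /\ decg (g1 p) = Z1 /\ decg (g2 p) = Z2.
  move=> Z1 Z2 [h1 h2 hz].
  have [f1 [hf1 e1]] := encode h1 (erefl N).
  have [f2 [hf2 e2]] := encode h2 (erefl N).
  pose p : 'rV[R]_P := row_mx (\row_j f1 j) (\row_j f2 j).
  have E1 : g1 p = f1 by apply: boolp.funext => j; rewrite /g1 row_mxEl mxE.
  have E2 : g2 p = f2 by apply: boolp.funext => j; rewrite /g2 row_mxEr mxE.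
  exists p; rewrite /S /= E1 E2 e1 e2 -hz subrr; split => //; split => //.
  by apply/eqP; rewrite -[_ == _]/(nf (0 : 'M[C]_(d * d)) == 0) /nf; apply/eqP;
     do 2 (apply: big1 => ? _); rewrite mxE /= expr0n /= addr0.
have nS : S !=set0.
  by have [p [hp _]] := enc sp sn (And3 hsp hsn hr); exists p.
have cf : continuous (fun p : 'rV[R]_P => nf (decg (g1 p)) + nf (decg (g2 p))).
  by apply: cD; apply: cts_nf.
have [c [[hc1 hc2] hc3] hmin] := evt_box cS bS nS cf.
exists (decg (g1 c)), (decg (g2 c)); split.
  split; [exact: decg_U|exact: decg_U|].
  apply/eqP; rewrite eq_sym -subr_eq0; apply/eqP; exact: nf_eq0.
move=> Z1 Z2 hZ; have [p [hp [<- <-]]] := enc _ _ hZ; exact: hmin.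
Qed.

Lemma feas_uniq a X1 X2 Z1 Z2 : feas a X1 X2 -> feas a Z1 Z2 ->
  (forall W1 W2, feas a W1 W2 -> nf X1 + nf X2 <= nf W1 + nf W2) ->
  nf Z1 + nf Z2 <= nf X1 + nf X2 -> X1 = Z1 /\ X2 = Z2.
Proof.
move=> [hx1 hx2 ex] [hz1 hz2 ez] hmin hle.
have h12 : 0 <= (2^-1 : R) <= 1 by apply/andP; split; [|rewrite invf_le1]; rewrite ?ler1n ?ltr0n.
have m1 := Uset_convex h12 hx1 hz1; have m2 := Uset_convex h12 hx2 hz2.
rewrite half_mid in m1; rewrite half_mid in m2.
have hf : feas a ((2^-1 : R)%:C *: (X1 + Z1)) ((2^-1 : R)%:C *: (X2 + Z2)).
  split => //.
  have -> : a.1%:C *: ((2^-1 : R)%:C *: (X1 + Z1)) - a.2%:C *: ((2^-1 : R)%:C *: (X2 + Z2))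
      = (2^-1 : R)%:C *: ((a.1%:C *: X1 - a.2%:C *: X2) + (a.1%:C *: Z1 - a.2%:C *: Z2)).
    by apply/matrixP => i j; rewrite !mxE; ring.
  by rewrite -ex -ez scalerDr -scalerDl -rmorphD (_ : 2^-1 + 2^-1 = 1 :> R) ?scale1r //; field.
have := hmin _ _ hf; rewrite !nf_mid => hm.
have n1 := nf_ge0 (X1 - Z1); have n2 := nf_ge0 (X2 - Z2).
have z1 : nf (X1 - Z1) = 0 by lra.
have z2 : nf (X2 - Z2) = 0 by lra.
by split; apply/eqP; rewrite -subr_eq0; apply/eqP; apply: nf_eq0.
Qed.

Lemma partB a : decomps (Uset d) rho a -> decomps (Uset d `&` commutant d V Vt) rho a.
Proof.
move=> [sp [sn [a1 a2 hsp hsn hr]]].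
have [X1 [X2 [hX hmin]]] := @feas_min a (fun _ _ => erefl) sp sn (And3 hsp hsn hr).
have inv g : Yg g *m X1 *m adjmx (Yg g) = X1 /\ Yg g *m X2 *m adjmx (Yg g) = X2.
  case: hX => h1 h2 e.
  have hf : feas a (Yg g *m X1 *m adjmx (Yg g)) (Yg g *m X2 *m adjmx (Yg g)).
    split; try exact: Uset_inv.
    have -> : a.1%:C *: (Yg g *m X1 *m adjmx (Yg g)) - a.2%:C *: (Yg g *m X2 *m adjmx (Yg g))
        = Yg g *m (a.1%:C *: X1 - a.2%:C *: X2) *m adjmx (Yg g).
      by rewrite mulmxBr mulmxBl -!scalemxAr -!scalemxAl.
    by rewrite -e rho_inv.
  have hu := feas_uniq (And3 h1 h2 e) hf hmin.
  have : nf (Yg g *m X1 *m adjmx (Yg g)) + nf (Yg g *m X2 *m adjmx (Yg g)) <= nf X1 + nf X2.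
    by rewrite !nf_conj ?Yg_unitary ?lexx.
  by move/hu => [<- <-].
case: hX => h1 h2 e.
exists X1, X2; split => //.
- by split => // g /=; apply: conj_comm; case: (inv g).
- by split => // g /=; apply: conj_comm; case: (inv g).
Qed.

End Main.
Local Close Scope complex_scope.

Theorem proposition4 (R : realType) (Gt : topologicalType)
    (mul : Gt -> Gt -> Gt) (inv : Gt -> Gt) (e : Gt)
    (d : nat) (V Vt : Gt -> 'M[R[i]]_d) (rho : 'M[R[i]]_(d * d)) :
  (0 < d)%N ->
  is_compact_group mul inv e ->
  unitary_rep mul e V -> unitary_rep mul e Vt ->
  Sset d rho -> commutant d V Vt rho ->
  [/\ (Uset d rho <->
       (forall W, Wset d W -> commutant d V Vt W -> 0 <= \tr (W *m rho))),
      ereal_inf [set ((a.1 + a.2)%:E) | a in decomps (Uset d) rho] =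
      ereal_inf [set ((a.1 + a.2)%:E) |
                 a in decomps (Uset d `&` commutant d V Vt) rho] &
      ereal_inf [set (a.2%:E) | a in decomps (Uset d) rho] =
      ereal_inf [set (a.2%:E) |
                 a in decomps (Uset d `&` commutant d V Vt) rho]].
Proof.
move=> d0 _ [_ _ hV _] [_ _ hVt _] hS hG.
have eqD : decomps (Uset d `&` commutant d V Vt) rho = decomps (Uset d) rho.
  apply/seteqP; split => a.
  - move=> [sp [sn [a1 a2 [hsp _] [hsn _] hr]]]; exists sp, sn; split => //.
  - exact: (partB hV hVt hG).
split.
- split; first by move=> hU W [_ hW] _; exact: hW rho hU.
  exact: (partA d0 hV hVt hS hG).
- by rewrite eqD.
- by rewrite eqD.
Qed.
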